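(* Let $G=(S,T,\pi)$ be a countable two-person win-lose game such that the family $\mathcal{B}^1_{\downarrow}(G)$ is ascending-union closed. Then for every $\mathbf{q}\in\Delta(T)$ the supremum $\sup_{\mathbf{p}\in\Delta(S)}\pi^{\mathrm{mix}}(\mathbf{p},\mathbf{q})$ is attained, the supremum $\sup_{\mathbf{p}\in\Delta(S)}\inf_{\mathbf{q}\in\Delta(T)}\pi^{\mathrm{mix}}(\mathbf{p},\mathbf{q})$ is attained, and $$\max_{\mathbf{p}\in\Delta(S)}\inf_{\mathbf{q}\in\Delta(T)}\pi^{\mathrm{mix}}(\mathbf{p},\mathbf{q})=\inf_{\mathbf{q}\in\Delta(T)}\max_{\mathbf{p}\in\Delta(S)}\pi^{\mathrm{mix}}(\mathbf{p},\mathbf{q}).$$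
   Context: A two-person win-lose game is a triple $G=(S,T,\pi)$ where $S,T$ are non-empty sets (possibly infinite) and $\pi:S\times T\to\{0,1\}$. It is countable if $|S|=|T|=\aleph_0$. For a set $X$, $\Delta(X)$ denotes the set of probability distributions $\mathbf{p}=(p_x)_{x\in X}$ on $X$ with at most countable support ($p_x\ge 0$, $\sum_x p_x=1$). For $\mathbf{p}\in\Delta(S)$, $\mathbf{q}\in\Delta(T)$, $\pi^{\mathrm{mix}}(\mathbf{p},\mathbf{q})=\sum_{s,t}p_sq_t\pi(s,t)$. For $s\in S$ let $B_s=\{t\in T:\pi(s,t)=1\}$, let $\mathcal{B}^1(G)=\{B_s:s\in S\}$, and let $\mathcal{B}^1_{\downarrow}(G)=\{A\subseteq T:\exists s\in S,\ A\subseteq B_s\}$. A family $\mathcal{F}$ of sets is ascending-union closed if whenever $A_i\in\mathcal{F}$ for $i=1,2,\ldots$ and $A_1\subset A_2\subset\cdots$, then $\bigcup_{i=1}^\infty A_i\in\mathcal{F}$. *)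

(* Defs.v *)
From HB Require Import structures.
From mathcomp Require Import all_boot all_order all_algebra.
From mathcomp Require Import all_classical all_reals.
From mathcomp Require Import ereal esum.
Set Implicit Arguments. Unset Strict Implicit. Unset Printing Implicit Defensive.
Import Order.TTheory GRing.Theory Num.Theory.
Local Open Scope classical_set_scope.
Local Open Scope ring_scope.

Definition countably_infinite (X : Type) : Prop :=
  exists f : nat -> X, bijective f.

(* Delta(X): probability distributions on X (nonnegative weights summing to 1;
   a finite esum of nonnegative terms forces countable support). *)
Definition distr (R : realType) (X : choiceType) : set (X -> R) :=
  [set p | (forall x, 0 <= p x) /\ (\esum_(x in [set: X]) (p x)%:E = 1)%E].

Definition pimix (R : realType) (S T : choiceType) (pi : S -> T -> bool)
  (p : S -> R) (q : T -> R) : \bar R :=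
  (\esum_(st in [set: S * T]) (p st.1 * q st.2 * (pi st.1 st.2)%:R)%:E)%E.

Definition Bset (S T : Type) (pi : S -> T -> bool) (s : S) : set T :=
  [set t | pi s t].

Definition B1down (S T : Type) (pi : S -> T -> bool) : set (set T) :=
  [set A | exists s, A `<=` Bset pi s].

Definition ascending_union_closed (X : Type) (F : set (set X)) : Prop :=
  forall A : nat -> set X, (forall i, F (A i)) ->
    (forall i, A i `<=` A i.+1) -> F (\bigcup_i A i).
Arguments distr : clear implicits.

(* Main.v *)
Require Import Defs.
From HB Require Import structures.
From mathcomp Require Import all_boot all_order all_algebra.
From mathcomp Require Import all_classical all_reals.
From mathcomp Require Import ereal esum.
From mathcomp Require Import sequences exp.
From mathcomp Require Import ring lra.
Set Implicit Arguments. Unset Strict Implicit. Unset Printing Implicit Defensive.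
Import Order.TTheory GRing.Theory Num.Theory.
Local Open Scope classical_set_scope.
Local Open Scope ring_scope.
Section Konig.
Variable P : nat -> nat -> bool.
Definition kagree (n : nat) (p : seq bool) := forall i, (i < size p)%N -> nth false p i = P n i.
Definition kinf (p : seq bool) := forall N, exists n, (N <= n)%N /\ kagree n p.
Fixpoint kpre (m : nat) : seq bool :=
  match m with 0 => [::] | m'.+1 => rcons (kpre m') `[< kinf (rcons (kpre m') true) >] end.
Lemma size_kpre m : size (kpre m) = m.
Proof. by elim: m => //= m IH; rewrite size_rcons IH. Qed.
Lemma kinf_kpre m : kinf (kpre m).
Proof.
elim: m => [|m IH] /=.
  by move=> N; exists N; split => // i.
case: asboolP => // H.
have [N0 HN0] : exists N0, forall n, (N0 <= n)%N -> ~ kagree n (rcons (kpre m) true).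
  apply: contrapT => H1; apply: H => N.
  apply: contrapT => H2; apply: H1; exists N => n Nn An; apply: H2; by exists n.
move=> N; have [n [Nn An]] := IH (maxn N N0).
exists n; split; first by apply: leq_trans Nn; exact: leq_maxl.
move=> i; rewrite size_rcons ltnS leq_eqVlt => /orP[/eqP ->|ilt].
  rewrite nth_rcons ltnn eqxx; apply/esym/negbTE/negP => Pn.
  apply: (HN0 n); first by apply: leq_trans Nn; exact: leq_maxr.
  move=> j; rewrite size_rcons ltnS leq_eqVlt => /orP[/eqP ->|jlt].
    by rewrite nth_rcons ltnn eqxx Pn.
  by rewrite nth_rcons jlt; apply: An.
by rewrite nth_rcons ilt; apply: An.
Qed.
Lemma nth_kpre m i : (i < m)%N -> nth false (kpre m) i = nth false (kpre i.+1) i.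
Proof.
elim: m => // m IH; rewrite ltnS leq_eqVlt => /orP[/eqP ->//|ilt].
by rewrite /= nth_rcons size_kpre ilt IH.
Qed.
Lemma konig : exists b : nat -> bool, forall m N, exists n, (N <= n)%N /\
   forall i, (i < m)%N -> b i = P n i.
Proof.
exists (fun i => nth false (kpre i.+1) i) => m N.
have [n [Nn An]] := kinf_kpre m N; exists n; split => // i im.
by rewrite -(nth_kpre im) An // size_kpre.
Qed.
End Konig.
Section ULim.
Variable R : realType.
Variable U : set_system nat.
Hypothesis UU : UltraFilter U.
#[local] Existing Instance UU.

Definition islim (L : R) (x : nat -> R) := forall eps, 0 < eps -> U [set n | `|x n - L| < eps].

Lemma islim_ex (x : nat -> R) : (forall n, 0 <= x n <= 1) -> exists L, islim L x.
Proof.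
move=> x01; set E := [set r : R | U [set n | r <= x n]].
have E0 : E 0.
  apply: filterS (@filterT _ U _) => n _; by case/andP: (x01 n).
have ub1 : ubound E 1.
  move=> r Er; rewrite leNgt; apply/negP => r1.
  have /filter_ex [n /= rn] := Er.
  by case/andP: (x01 n) => _ xn1; move: (le_lt_trans (le_trans rn xn1) r1); rewrite ltxx.
have hs : has_sup E by split; [exists 0 | exists 1].
exists (sup E) => eps eps0.
have [r Er rlt] := sup_adherent eps0 hs.
have H1 : U [set n | sup E - eps < x n].
  by apply: filterS Er => n /= rn; apply: lt_le_trans rn.
have H2 : U [set n | x n < sup E + eps].
  case: (in_ultra_setVsetC [set n | x n < sup E + eps] UU) => // HC.
  have : E (sup E + eps).
    by apply: filterS HC => n /= /negP; rewrite -leNgt.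
  by move/(sup_upper_bound hs) => h; exfalso; lra.
apply: filterS (filterI H1 H2) => n /= [h1 h2].
by rewrite ltr_distlC; apply/andP; split; lra.
Qed.

Lemma islim_le a b x y : islim a x -> islim b y -> (forall n, x n <= y n) -> a <= b.
Proof.
move=> ha hb xy; rewrite leNgt; apply/negP => ba.
have e0 : 0 < (a - b) / 2 by rewrite divr_gt0 // subr_gt0.
case: (filter_ex (filterI (ha _ e0) (hb _ e0))) => n /= [h1 h2].
move: h1 h2; rewrite !ltr_distlC => /andP[h1 h1'] /andP[h2 h2'].
have := xy n; lra.
Qed.

Lemma islim_uniq a b x : islim a x -> islim b x -> a = b.
Proof. by move=> ha hb; apply/eqP; rewrite eq_le !(islim_le ha hb) ?(islim_le hb ha). Qed.

Lemma islimD a b x y : islim a x -> islim b y -> islim (a + b) (fun n => x n + y n).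
Proof.
move=> ha hb eps e0; have e2 : 0 < eps / 2 by rewrite divr_gt0.
apply: filterS (@filterI _ U _ _ _ (ha _ e2) (hb _ e2)) => n /= [h1 h2].
rewrite (_ : x n + y n - (a + b) = (x n - a) + (y n - b)); last by ring.
apply: le_lt_trans (ler_normD _ _) _.
by rewrite (splitr eps) ltrD.
Qed.

Lemma islim_cst c : islim c (fun=> c).
Proof. by move=> eps e0; apply: filterS (@filterT _ U _) => n _ /=; rewrite subrr normr0. Qed.

Lemma islim_pos a x : islim a x -> 0 < a -> exists n, 0 < x n.
Proof.
move=> ha a0; have /filter_ex [n /=] := ha _ a0.
rewrite ltr_distlC => /andP[_ h]; exists n; lra.
Qed.

Lemma islim_ge a x c : islim a x -> (forall eps, 0 < eps -> U [set n | c - eps <= x n]) -> c <= a.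
Proof.
move=> ha hc; rewrite leNgt; apply/negP => ac.
have e0 : 0 < (c - a) / 2 by rewrite divr_gt0 // subr_gt0.
case: (filter_ex (filterI (ha _ e0) (hc _ e0))) => n /= [h1 h2].
move: h1; rewrite ltr_distlC => /andP[h1 h1']; lra.
Qed.
End ULim.
Section Construct.
Variables (R : realType) (S T : Type) (pi : S -> T -> bool) (e : nat -> T) (f : nat -> S).
Hypotheses (esurj : forall t, exists i, e i = t) (fsurj : forall s, exists k, f k = s).
Hypothesis hF : ascending_union_closed (B1down pi).
Variable lam : set S -> R.
Hypotheses (lam0 : forall X, 0 <= lam X) (lamT : lam setT = 1)
 (lamD : forall X Y, X `&` Y = set0 -> lam (X `|` Y) = lam X + lam Y)
 (lampos : forall X, 0 < lam X -> X !=set0).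
Variable v : R.
Hypothesis cov : forall t, v <= lam [set s | pi s t].

Lemma lam_set0 : lam set0 = 0.
Proof. have := lamD (setI0 set0); rewrite setU0 => h; lra. Qed.

Lemma lam_split X Y : lam X = lam (X `&` Y) + lam (X `&` ~` Y).
Proof.
rewrite -lamD; last by rewrite setIACA setICr setI0.
by rewrite -setIUr setUCr setIT.
Qed.

Lemma lam_le X Y : X `<=` Y -> lam X <= lam Y.
Proof.
move=> XY; rewrite (lam_split Y X) (_ : Y `&` X = X); last by apply/setIidr.
by rewrite lerDl.
Qed.

Lemma lam_C X : lam (~` X) = 1 - lam X.
Proof. by rewrite -lamT (lam_split setT X) !setTI; lra. Qed.

Definition Pk (s : S) (k m : nat) := forall i, (i < m)%N -> pi s (e i) -> pi (f k) (e i).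
Definition G m K := [set s | exists2 k, (k < K)%N & Pk s k m].
Definition hh m K := lam (G m K).

Lemma G_m m m' K : (m <= m')%N -> G m' K `<=` G m K.
Proof. move=> mm s [k kK Pks]; exists k => // i im; apply: Pks; exact: leq_trans im mm. Qed.
Lemma G_K m K K' : (K <= K')%N -> G m K `<=` G m K'.
Proof. by move=> KK s [k kK Pks]; exists k => //; exact: leq_trans kK KK. Qed.
Lemma G_0 m : G m 0 = set0.
Proof. by apply/seteqP; split => // s [k]. Qed.

Lemma hh_ge0 m K : 0 <= hh m K. Proof. exact: lam0. Qed.
Lemma hh_le1 m K : hh m K <= 1. Proof. by rewrite -lamT; apply: lam_le. Qed.
Lemma hh_m m m' K : (m <= m')%N -> hh m' K <= hh m K.
Proof. by move=> mm; apply: lam_le; exact: G_m. Qed.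
Lemma hh_K m K K' : (K <= K')%N -> hh m K <= hh m K'.
Proof. by move=> KK; apply: lam_le; exact: G_K. Qed.

Definition eK K := inf (range (fun m => hh m K)).

Lemma eK_hinf K : has_inf (range (fun m => hh m K)).
Proof. split; first by exists (hh 0 K), 0%N. by exists 0 => _ [m _ <-]; exact: hh_ge0. Qed.

Lemma eK_le m K : eK K <= hh m K.
Proof. by apply: ge_inf; [case: (eK_hinf K) | exists m]. Qed.

Lemma eK_ge0 K : 0 <= eK K.
Proof. by apply: lb_le_inf; [exists (hh 0 K), 0%N | move=> _ [m _ <-]; exact: hh_ge0]. Qed.

Lemma eK_le1 K : eK K <= 1.
Proof. exact: le_trans (eK_le 0 K) (hh_le1 _ _). Qed.

Lemma eK_adh K eps : 0 < eps -> exists m0, forall m, (m0 <= m)%N -> hh m K < eK K + eps.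
Proof.
move=> e0; have [_ [m _ <-] hm] := inf_adherent e0 (eK_hinf K).
by exists m => m' mm; apply: le_lt_trans hm; exact: hh_m.
Qed.

Lemma eK_mono K : eK K <= eK K.+1.
Proof.
apply: lb_le_inf; first by exists (hh 0 K.+1), 0%N.
move=> _ [m _ <-]; apply: le_trans (eK_le m K) _; exact: hh_K.
Qed.

Lemma eK_0 : eK 0 = 0.
Proof.
apply/eqP; rewrite eq_le eK_ge0 andbT; apply: le_trans (eK_le 0 0) _.
by rewrite /hh G_0 lam_set0.
Qed.

Lemma eK_unif K eps : 0 < eps -> exists m0, forall m k, (m0 <= m)%N -> (k <= K)%N -> hh m k < eK k + eps.
Proof.
move=> e0; elim: K => [|K [m0 IH]].
  have [m0 H] := eK_adh 0 e0; exists m0 => m k mm; rewrite leqn0 => /eqP ->; exact: H.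
have [m1 H] := eK_adh K.+1 e0; exists (maxn m0 m1) => m k mm.
rewrite leq_eqVlt => /orP[/eqP ->|kK].
  by apply: H; apply: leq_trans mm; exact: leq_maxr.
by apply: IH => //; apply: leq_trans mm; exact: leq_maxl.
Qed.
Lemma geom_sum (eps : R) J : \sum_(k < J) eps / 2 ^+ k.+2 = eps / 2 - eps / 2 ^+ J.+1.
Proof.
elim: J => [|J IH]; first by rewrite big_ord0 expr1 subrr.
rewrite big_ord_recr /= IH !exprS.
have h2 : (2 : R) != 0 by rewrite pnatr_eq0.
have hX : (2 : R) ^+ J != 0 by rewrite expf_neq0.
field; rewrite ?h2 ?hX //.
Qed.

Lemma eK_to1 eps : 0 < eps -> exists K, 1 - eps <= eK K.
Proof.
move=> e0; apply: contrapT => /forallNP H.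
have HK K : eK K < 1 - eps by rewrite ltNge; apply/negP; exact: H K.
pose d k := eps / 2 ^+ k.+2.
have d0 k : 0 < d k by rewrite divr_gt0 // exprn_gt0.
have /choice[mK hmK] : forall k, exists m, hh m k < eK k + d k.
  by move=> k; have [m0 Hm] := eK_adh k (d0 k); exists m0; apply: Hm.
pose Q k := ~` G (mK k) k.
have lamQ k : eps - d k < lam (Q k).
  by rewrite /Q lam_C; have := hmK k; have := HK k; rewrite /hh; lra.
have QQ J K : (J <= K)%N -> lam (Q K `&` ~` Q J) <= d J.
  move=> JK; pose M := maxn (mK K) (mK J).
  have sub : Q K `&` ~` Q J `<=` G (mK J) J `&` ~` G M J.
    move=> s [QKs nQJs]; split; first by move: nQJs; rewrite /Q /= => /contrapT.
    move=> GMJ; apply: QKs; apply: (@G_m (mK K) M); first exact: leq_maxl.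
    exact: (G_K JK).
  apply: le_trans (lam_le sub) _.
  have e1 : lam (G (mK J) J) = lam (G M J) + lam (G (mK J) J `&` ~` G M J).
    rewrite {1}(lam_split _ (G M J)) (_ : G (mK J) J `&` G M J = G M J) //.
    by apply/setIidr; apply: G_m; exact: leq_maxr.
  have := eK_le M J; have := hmK J; rewrite /hh; lra.
pose Wr K J := [set s | Q K s /\ forall k, (k < J)%N -> Q k s].
have lamWr K J : (J <= K.+1)%N -> lam (Q K) - \sum_(k < J) d k <= lam (Wr K J).
  elim: J => [_|J IH JK].
    rewrite big_ord0 subr0; apply: lam_le => s Qs; by split.
  have IH' := IH (ltnW JK).
  have e1 := lam_split (Wr K J) (Q J).
  have -> : Wr K J.+1 = Wr K J `&` Q J.
    apply/seteqP; split => s /=.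
      by move=> [QKs Hk]; split; [split => // k kJ; apply: Hk; exact: ltnW | apply: Hk].
    move=> [[QKs Hk] QJs]; split => // k; rewrite ltnS leq_eqVlt => /orP[/eqP -> //|]; exact: Hk.
  have : lam (Wr K J `&` ~` Q J) <= d J.
    apply: le_trans (QQ J K _); first by apply: lam_le => s [[QKs _] nQ].
    by rewrite -ltnS.
  rewrite big_ord_recr /=; lra.
have Wpos K : 0 < lam (Wr K K.+1).
  apply: lt_le_trans (lamWr K K.+1 (leqnn _)).
  rewrite /d geom_sum.
  have := lamQ K; rewrite /d !exprS.
  have h2 : 0 < 2 ^+ K :> R by rewrite exprn_gt0.
  move=> hQ; have : 0 < eps / 2 + eps / (2 * (2 * 2 ^+ K)).
    by rewrite addr_gt0 // divr_gt0 // !mulr_gt0.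
  suff -> : eps / 2 + eps / (2 * (2 * 2 ^+ K)) = eps - eps / (2 * (2 * 2 ^+ K)) - (eps / 2 - eps / (2 * 2 ^+ K)) by lra.
  field; by rewrite gt_eqF.
have /choice[sK hsK] : forall K, exists s, Wr K K.+1 s.
  by move=> K; case: (lampos (Wpos K)) => s Ws; exists s.
have [b Hb] := konig (fun n i => pi (sK n) (e i)).
pose A m := [set t | exists i, [/\ (i < m)%N, e i = t & b i]].
have hA : B1down pi (\bigcup_m A m).
  apply: hF.
    move=> m; have [n [_ Hn]] := Hb m 0%N; exists (sK n) => t [i [im <- bi]].
    by rewrite /Bset /= -Hn.
  by move=> m t [i [im et bi]]; exists i; split => //; exact: ltnW.
case: hA => s0 Hs0; have [k0 fk0] := fsurj s0.
have [n [kn Hn]] := Hb (mK k0.+1) k0.+1.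
have [_ HQ] := hsK n.
have := HQ k0.+1; rewrite ltnS => /(_ kn); apply.
exists k0 => // i iM pie; rewrite fk0.
have : (\bigcup_m A m) (e i) by exists i.+1 => //; exists i; split => //; rewrite Hn.
by move/Hs0.
Qed.
Lemma cov_G t K m : (exists2 j, (j < m)%N & e j = t) ->
  lam ([set s | pi s t] `&` G m K) <= \sum_(k < K) (pi (f k) t)%:R * (hh m k.+1 - hh m k).
Proof.
move=> [j jm ejt]; elim: K => [|K IH].
  by rewrite big_ord0 G_0 setI0 lam_set0.
rewrite big_ord_recr /=.
rewrite (lam_split _ (G m K)).
have -> : [set s | pi s t] `&` G m K.+1 `&` G m K = [set s | pi s t] `&` G m K.
  by rewrite -setIA; congr (_ `&` _); apply/setIidr; apply: G_K.
apply: lerD => //.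
case Hp : (pi (f K) t); rewrite ?mul1r ?mul0r.
  apply: le_trans (lam_le (Y := G m K.+1 `&` ~` G m K) _) _.
    by move=> s [[_ h1] h2].
  rewrite /hh (lam_split (G m K.+1) (G m K)).
  rewrite (_ : G m K.+1 `&` G m K = G m K); last by apply/setIidr; apply: G_K.
  lra.
rewrite (_ : _ `&` _ = set0) ?lam_set0 //.
apply/seteqP; split => // s [[/= pst [k]]]; rewrite ltnS leq_eqVlt => /orP[/eqP ->|kK] Pks nG.
  by move: (Pks j jm); rewrite ejt Hp pst => /(_ isT).
by apply: nG; exists k.
Qed.

Lemma cov_lower t K m : (exists2 j, (j < m)%N & e j = t) ->
  v - 1 + eK K <= \sum_(k < K) (pi (f k) t)%:R * (hh m k.+1 - hh m k).
Proof.
move=> ht; apply: le_trans (cov_G K ht).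
have h1 := lam_split [set s | pi s t] (G m K).
have h2 : lam ([set s | pi s t] `&` ~` G m K) <= lam (~` G m K) by apply: lam_le => s [].
have := cov t; have := eK_le m K; rewrite lam_C in h2; rewrite /hh; lra.
Qed.

Definition aK k := eK k.+1 - eK k.

Lemma cov_a t K eps : 0 < eps -> v - 1 + eK K - eps <= \sum_(k < K) aK k * (pi (f k) t)%:R.
Proof.
move=> e0; have [j ejt] := esurj t.
have e1 : 0 < eps / K.+1%:R by rewrite divr_gt0.
have [m0 Hm0] := eK_unif K e1.
move: (maxn m0 j.+1) (leq_maxl m0 j.+1) (leq_maxr m0 j.+1) => m hm1 hm2.
have hj : exists2 j', (j' < m)%N & e j' = t by exists j.
apply: le_trans (_ : v - 1 + eK K - eps <= \sum_(k < K) (pi (f k) t)%:R * (hh m k.+1 - hh m k) - eps) _.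
  by have := cov_lower K hj; lra.
have : \sum_(k < K) (pi (f k) t)%:R * (hh m k.+1 - hh m k) <= \sum_(k < K) (aK k * (pi (f k) t)%:R + eps / K.+1%:R).
  apply: ler_sum => k _; case: (pi (f k) t); rewrite ?mul1r ?mulr1 ?mul0r ?mulr0 ?add0r; last by apply: ltW.
  have := Hm0 m k.+1 hm1 (ltn_ord k); have := eK_le m k; rewrite /aK; move: (eps / K.+1%:R) => d; lra.
rewrite big_split /= sumr_const card_ord.
have : eps / K.+1%:R *+ K <= eps.
  by rewrite -mulr_natr -mulrA ler_piMr ?(ltW e0) // ler_pdivrMl ?ltr0Sn // mulr1 mulrSr lerDl ler01.
move: (eps / K.+1%:R *+ K) => d; lra.
Qed.

Lemma construct : exists a : nat -> R, [/\ (forall k, 0 <= a k),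
  (forall K, \sum_(k < K) a k <= 1),
  (forall eps, 0 < eps -> exists K, 1 - eps <= \sum_(k < K) a k) &
  (forall t eps, 0 < eps -> exists K, v - eps <= \sum_(k < K) a k * (pi (f k) t)%:R)].
Proof.
have tel K : \sum_(k < K) aK k = eK K.
  by rewrite -(big_mkord xpredT aK) /aK telescope_sumr // eK_0 subr0.
exists aK; split.
- by move=> k; rewrite /aK subr_ge0 eK_mono.
- by move=> K; rewrite tel eK_le1.
- by move=> eps e0; have [K HK] := eK_to1 e0; exists K; rewrite tel.
move=> t eps e0; have e2 : 0 < eps / 2 by rewrite divr_gt0.
have [K HK] := eK_to1 e2; exists K.
have := cov_a t K e2; lra.
Qed.
End Construct.
Lemma hedge_alg (R : realType) (x v A Nr nr Lb Lr Ln : R) : 0 < x -> 4 * x < v -> v <= 1 ->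
  0 <= A -> 0 <= Nr -> 0 < nr ->
  Lb * A <= Lr * Nr + Ln -> Lr <= - (x * (v - 2 * x)) -> - (x / (1 - x)) <= Lb ->
  Ln <= nr -> nr <= x ^+ 2 * Nr -> (v - 4 * x) * Nr <= A.
Proof.
move=> x0 xv v1 A0 N0 n0 hln hr hb hn hq.
have bp : 0 < 1 - x by lra.
have hA : Lr * Nr <= - (x * (v - 2 * x)) * Nr by rewrite ler_wpM2r.
have hB : - (x / (1 - x)) * A <= Lb * A by rewrite ler_wpM2r.
have h0 : - (x / (1 - x)) * A <= - (x * (v - 2 * x)) * Nr + nr.
  apply: le_trans hB _; apply: le_trans hln _; exact: lerD.
have h1 : - (A * x) <= (1 - x) * (- (x * (v - 2 * x)) * Nr + nr).
  have := ler_wpM2l (ltW bp) h0.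
  suff -> : (1 - x) * (- (x / (1 - x)) * A) = - (A * x) by [].
  by field; rewrite gt_eqF.
rewrite -(ler_pM2r x0).
have hc : x ^+ 2 * Nr * (v - 2 * x) <= x ^+ 2 * Nr.
  by rewrite ler_piMr ?mulr_ge0 ?exprn_ge0 //; [exact: ltW | lra | lra].
have hbn : (1 - x) * nr <= nr by rewrite ler_piMl //; [exact: ltW | lra].
have hxn : 0 <= x * nr by rewrite mulr_ge0 //; exact: ltW.
have e1 : (1 - x) * (- (x * (v - 2 * x)) * Nr + nr) = - (x * v * Nr) + 2 * (x ^+ 2 * Nr) + x ^+ 2 * Nr * v - x ^+ 2 * Nr * (2 * x) + (1 - x) * nr.
  by rewrite expr2; ring.
have e2 : (v - 4 * x) * Nr * x = x * v * Nr - 4 * (x ^+ 2 * Nr).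
  by rewrite expr2; ring.
have e3 : x ^+ 2 * Nr * (v - 2 * x) = x ^+ 2 * Nr * v - x ^+ 2 * Nr * (2 * x) by ring.
rewrite e1 in h1; rewrite e2; rewrite e3 in hc.
move: (x ^+ 2 * Nr) (x ^+ 2 * Nr * v) (x ^+ 2 * Nr * (2 * x)) (x * v * Nr) ((1 - x) * nr) (A * x) h1 hc hbn hq => P1 P2 P3 P4 P5 P6.
move=> *; lra.
Qed.
Section Hedge.
Variables (R : realType) (S : Type) (n : nat) (g : S -> nat -> bool) (v : R).
Hypothesis npos : (0 < n)%N.
Hypothesis BR : forall w : nat -> R, (forall j, 0 <= w j) -> 0 < \sum_(j < n) w j ->
  forall d, 0 < d -> exists s, (v - d) * \sum_(j < n) w j <= \sum_(j < n) w j * (g s j)%:R.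

Fixpoint hrun (F : (nat -> R) -> S) (b : R) (N : nat) : seq S :=
  match N with 0 => [::]
  | N'.+1 => F (fun j => b ^+ count (fun s => g s j) (hrun F b N')) :: hrun F b N' end.

Lemma size_hrun F b N : size (hrun F b N) = N.
Proof. by elim: N => //= N ->. Qed.

Definition wt (b : R) (l : seq S) j := b ^+ count (fun s => g s j) l.
Definition Phi b l := \sum_(j < n) wt b l j.

Lemma Phi_cons b s l : Phi b (s :: l) = Phi b l - (1 - b) * \sum_(j < n) wt b l j * (g s j)%:R.
Proof.
rewrite /Phi mulr_sumr -sumrB; apply: eq_bigr => j _.
rewrite /wt /= exprD; case: (g s j); rewrite /= ?expr1 ?expr0 ?mulr1 ?mulr0 ?subr0 ?mul1r //.
ring.
Qed.

Lemma v_le1 : v <= 1.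
Proof.
apply/ler_addgt0Pr => d d0.
have hs : 0 < \sum_(j < n) (1 : R) by rewrite sumr_const card_ord ltr0n.
have [s Hs] := BR (fun _ => ler01) hs d0.
have : \sum_(j < n) 1 * (g s j)%:R <= \sum_(j < n) (1 : R).
  by apply: ler_sum => j _; rewrite mul1r; case: (g s j).
move: Hs; rewrite -lerBlDr => h1 h2.
have := le_trans h1 h2; rewrite -{2}(mul1r (\sum_(j < n) (1 : R))) ler_pM2r //.
Qed.

Lemma hedge eps : 0 < eps -> exists l : seq S, (0 < size l)%N /\
  forall j, (j < n)%N -> (v - eps) * (size l)%:R <= (count (fun s => g s j) l)%:R.
Proof.
move=> e0.
have hs : 0 < \sum_(j < n) (1 : R) by rewrite sumr_const card_ord ltr0n.
have [s0 _] := BR (fun _ => ler01) hs ltr01.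
have v1 := v_le1.
case: (lerP (v - eps) 0) => hv.
  exists [:: s0]; split => // j _; apply: le_trans (_ : 0 <= _); last by [].
  by rewrite mulr1.
have eps4 : 0 < 4 - eps.
  rewrite subr_gt0; apply: lt_le_trans (_ : eps < 1) _; last by rewrite ler1n.
  by apply: lt_le_trans v1; rewrite -subr_gt0.
pose d := eps / 2; pose c := v - d; pose b := 1 - eps / 4.
have d0 : 0 < d by rewrite divr_gt0.
have c0 : 0 < c by rewrite /c /d; lra.
have b0 : 0 < b by rewrite /b; lra.
have b1 : b < 1 by rewrite /b; lra.
have /choice[F HF] : forall w : nat -> R, exists s, (forall j, 0 <= w j) -> 0 < \sum_(j < n) w j ->
    c * \sum_(j < n) w j <= \sum_(j < n) w j * (g s j)%:R.
  move=> w; case: (pselect ((forall j, 0 <= w j) /\ 0 < \sum_(j < n) w j)).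
    by move=> [h1 h2]; have [s Hs] := BR h1 h2 d0; exists s.
  by move=> H; exists s0 => h1 h2; exfalso; apply: H.
pose r := 1 - (1 - b) * c.
have c1 : c <= 1 by rewrite /c /d; lra.
have r0 : 0 < r.
  rewrite /r subr_gt0; apply: (@le_lt_trans _ _ ((1 - b) * 1)).
    by rewrite ler_wpM2l // /b; lra.
  by rewrite mulr1 /b; lra.
have wt0 l j : 0 < wt b l j by rewrite /wt exprn_gt0.
have Phi0 l : 0 < Phi b l.
  rewrite /Phi (bigD1 (Ordinal npos)) //= ltr_wpDr //; first by apply: sumr_ge0 => j _; apply: ltW.
have Phib N : Phi b (hrun F b N) <= r ^+ N * n%:R.
  elim: N => [|N IH] /=.
    rewrite expr0 mul1r /Phi /wt /=; under eq_bigr do rewrite expr0.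
    by rewrite sumr_const card_ord.
  rewrite Phi_cons exprS -mulrA.
  have := HF (fun j => wt b (hrun F b N) j) (fun j => ltW (wt0 _ j)) (Phi0 _).
  rewrite -/(Phi b _) => h.
  have hb : 0 <= 1 - b by lra.
  have := ler_wpM2l hb h.
  have := Phi0 (hrun F b N).
  have hr : 0 <= r by apply: ltW.
  have := ler_wpM2l hr IH.
  rewrite /r; move: (Phi b (hrun F b N)) (\sum_(j < n) _) (r ^+ N * n%:R) => P X Y.
  lra.
pose N := (Num.truncn (16 * n%:R / eps ^+ 2)).+1.
exists (hrun F b N); rewrite size_hrun; split => // j jn.
pose L := count (fun s => g s j) (hrun F b N).
have hL : b ^+ L <= r ^+ N * n%:R.
  apply: le_trans (Phib N); rewrite /Phi (bigD1 (Ordinal jn)) //= ler_wpDr //.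
  by apply: sumr_ge0 => i _; apply: ltW.
have n0 : 0 < n%:R :> R by rewrite ltr0n.
have hln : ln (b ^+ L) <= ln (r ^+ N * n%:R).
  by rewrite ler_ln // posrE ?exprn_gt0 ?mulr_gt0 ?exprn_gt0.
rewrite lnM ?posrE ?exprn_gt0 // !lnXn // in hln.
have lnr : ln r <= r - 1 by have := @le_ln1Dx _ (r - 1); rewrite [1 + _]addrC subrK; apply; lra.
have lnb : - (b^-1 - 1) <= ln b.
  have := @le_ln1Dx _ (b^-1 - 1); rewrite [1 + _]addrC subrK.
  rewrite -[ln b]opprK -lnV ?posrE // lerNl opprK; apply.
  have : 0 < b^-1 by rewrite invr_gt0.
  lra.
have lnn : ln n%:R <= n%:R :> R by apply: ltW; apply: ln_sublinear.
have hN : 16 * n%:R / eps ^+ 2 < N%:R by apply: truncnS_gt.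
have x0 : 0 < eps / 4 by rewrite divr_gt0.
have e4 : 4 * (eps / 4) = eps by field.
have hq : n%:R <= (eps / 4) ^+ 2 * N%:R.
  rewrite -ler_pdivrMl ?exprn_gt0 //; apply: ltW; apply: le_lt_trans hN.
  rewrite le_eqVlt; apply/orP; left; apply/eqP; field; exact: lt0r_neq0.
have hr : ln r <= - (eps / 4 * (v - 2 * (eps / 4))).
  apply: le_trans lnr _; rewrite /r /b /c /d le_eqVlt; apply/orP; left; apply/eqP; by field.
have hb : - (eps / 4 / (1 - eps / 4)) <= ln b.
  apply: le_trans lnb; rewrite /b le_eqVlt; apply/orP; left; apply/eqP.
  by field; exact: lt0r_neq0.
move: hln; rewrite -[ln b *+ L]mulr_natr -[ln r *+ N]mulr_natr => hln.
have xv : 4 * (eps / 4) < v by rewrite e4 -subr_gt0.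
have := hedge_alg x0 xv v1 (ler0n _ L) (ler0n _ N) n0 hln hr hb lnn hq.
by rewrite e4.
Qed.
End Hedge.
Section EsumEnum.
Local Open Scope ereal_scope.
Variables (R : realType) (X : choiceType) (en : nat -> X).
Hypothesis hen : bijective en.

Lemma esum_enum (a : X -> \bar R) : (forall x, 0 <= a x) ->
  \esum_(x in [set: X]) a x = \sum_(i <oo) a (en i).
Proof.
move=> a0; rewrite (reindex_esum [set: nat] [set: X] en a); last by rewrite setTT_bijective.
by rewrite nneseries_esumT.
Qed.

Lemma esumZ_enum (c : R) (a : X -> \bar R) : (0 <= c)%R -> (forall x, 0 <= a x) ->
  \esum_(x in [set: X]) (c%:E * a x) = c%:E * \esum_(x in [set: X]) a x.
Proof.
move=> c0 a0; rewrite !esum_enum //; last by move=> x; rewrite mule_ge0.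
by rewrite nneseriesZl.
Qed.

Lemma esum_le_distr (p : X -> R) (Y : X -> \bar R) (M : R) :
  (forall x, (0 <= p x)%R) -> \esum_(x in [set: X]) (p x)%:E = 1 ->
  (forall x, 0 <= Y x) -> (0 <= M)%R -> (forall x, Y x <= M%:E) ->
  \esum_(x in [set: X]) ((p x)%:E * Y x) <= M%:E.
Proof.
move=> p0 p1 Y0 M0 YM.
apply: le_trans (_ : \esum_(x in [set: X]) (M%:E * (p x)%:E) <= _).
  apply: le_esum => x _; rewrite [M%:E * _]muleC; apply: lee_pmul => //.
  by rewrite lee_fin.
by rewrite esumZ_enum // p1 mule1.
Qed.

Lemma esum_ge_distr (p : X -> R) (Y : X -> \bar R) (m : R) :
  (forall x, (0 <= p x)%R) -> \esum_(x in [set: X]) (p x)%:E = 1 ->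
  (0 <= m)%R -> (forall x, m%:E <= Y x) ->
  m%:E <= \esum_(x in [set: X]) ((p x)%:E * Y x).
Proof.
move=> p0 p1 m0 mY.
apply: le_trans (_ : _ <= \esum_(x in [set: X]) (m%:E * (p x)%:E)) _.
  by rewrite esumZ_enum // p1 mule1.
apply: le_esum => x _; rewrite [m%:E * _]muleC; apply: lee_pmul => //.
by rewrite lee_fin.
Qed.

Definition dirac (x0 : X) : X -> R := fun x => if x == x0 then 1%R else 0%R.

Lemma esum_dirac (x0 : X) (Y : X -> \bar R) : (forall x, 0 <= Y x) ->
  \esum_(x in [set: X]) ((dirac x0 x)%:E * Y x) = Y x0.
Proof.
move=> Y0; rewrite (eq_esum (b := fun x => if x \in [set x0] then Y x else 0)).
  by rewrite -esum_mkcond esum_set1.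
move=> x _; rewrite /dirac; case: eqP => [->|nx]; first by rewrite mem_set // mul1e.
by rewrite memNset ?mul0e.
Qed.

Lemma dirac_distr (x0 : X) : (forall x, (0 <= dirac x0 x)%R) /\ \esum_(x in [set: X]) (dirac x0 x)%:E = 1.
Proof.
split; first by move=> x; rewrite /dirac; case: eqP.
rewrite (eq_esum (b := fun x => (dirac x0 x)%:E * 1)); last by move=> x _; rewrite mule1.
by rewrite esum_dirac.
Qed.
End EsumEnum.

Section NnSer.
Local Open Scope ereal_scope.
Lemma nnser_sup (R : realType) (u : nat -> \bar R) : (forall i, 0 <= u i) ->
  \sum_(i <oo) u i = ereal_sup (range (fun N => \sum_(0 <= i < N) u i)).
Proof.
move=> u0; have := @ereal_nondecreasing_series _ u xpredT 0%N (fun n _ _ => u0 n).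
by move/ereal_nondecreasing_cvgn/cvg_lim => ->.
Qed.
End NnSer.
Section Pimix.
Local Open Scope ereal_scope.
Variables (R : realType) (S T : choiceType) (pi : S -> T -> bool).
Variables (f : nat -> S) (e : nat -> T).
Hypotheses (hf : bijective f) (he : bijective e).

Definition qB (q : T -> R) (s : S) := \esum_(t in [set: T]) (q t * (pi s t)%:R)%:E.
Definition pB (p : S -> R) (t : T) := \esum_(s in [set: S]) (p s * (pi s t)%:R)%:E.

Lemma pimix_S (p : S -> R) (q : T -> R) : (forall s, (0 <= p s)%R) -> (forall t, (0 <= q t)%R) ->
  pimix pi p q = \esum_(s in [set: S]) ((p s)%:E * qB q s).
Proof.
move=> p0 q0; rewrite /pimix (_ : [set: S * T] = [set: S] `*`` (fun _ => [set: T])); last by apply/seteqP; split.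
rewrite -(esum_esum (a := fun s t => (p s * q t * (pi s t)%:R)%:E)); last by move=> s t _ _; rewrite lee_fin !mulr_ge0 // ler0n.
apply: eq_esum => s _; rewrite /qB -(esumZ_enum he) //; last by move=> t; rewrite lee_fin mulr_ge0 // ler0n.
by apply: eq_esum => t _; rewrite -EFinM mulrA.
Qed.

Lemma pimix_T (p : S -> R) (q : T -> R) : (forall s, (0 <= p s)%R) -> (forall t, (0 <= q t)%R) ->
  pimix pi p q = \esum_(t in [set: T]) ((q t)%:E * pB p t).
Proof.
move=> p0 q0; rewrite /pimix.
rewrite (reindex_esum [set: T * S] [set: S * T] (fun ts => (ts.2, ts.1))); last first.
  by rewrite setTT_bijective; exists (fun st => (st.2, st.1)); case.
rewrite (_ : [set: T * S] = [set: T] `*`` (fun _ => [set: S])); last by apply/seteqP; split.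
rewrite -(esum_esum (a := fun t s => (p s * q t * (pi s t)%:R)%:E)); last by move=> t s _ _; rewrite lee_fin !mulr_ge0 // ler0n.
apply: eq_esum => t _; rewrite /pB -(esumZ_enum hf) //; last by move=> s; rewrite lee_fin mulr_ge0 // ler0n.
by apply: eq_esum => s _ /=; rewrite -EFinM mulrA (mulrC (q t)).
Qed.

Lemma qB_ge0 q s : (forall t, (0 <= q t)%R) -> 0 <= qB q s.
Proof. by move=> q0; apply: esum_ge0 => t _; rewrite lee_fin mulr_ge0 // ler0n. Qed.

Lemma pB_ge0 p t : (forall s, (0 <= p s)%R) -> 0 <= pB p t.
Proof. by move=> p0; apply: esum_ge0 => s _; rewrite lee_fin mulr_ge0 // ler0n. Qed.

Lemma qB_le1 q s : distr R T q -> qB q s <= 1.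
Proof.
move=> [q0 q1]; rewrite -q1; apply: le_esum => t _; rewrite lee_fin.
by rewrite ler_piMr // ?q0 //; case: (pi s t).
Qed.

Lemma pB_le1 p t : distr R S p -> pB p t <= 1.
Proof.
move=> [p0 p1]; rewrite -p1; apply: le_esum => s _; rewrite lee_fin.
by rewrite ler_piMr // ?p0 //; case: (pi s t).
Qed.

Lemma pimix_ge0 p q : distr R S p -> distr R T q -> 0 <= pimix pi p q.
Proof. by move=> [p0 _] [q0 _]; apply: esum_ge0 => st _; rewrite lee_fin !mulr_ge0 // ler0n. Qed.

Lemma pimix_le1 p q : distr R S p -> distr R T q -> pimix pi p q <= 1.
Proof.
move=> hp hq; have [p0 p1] := hp; have [q0 q1] := hq.
rewrite pimix_S //; apply: (esum_le_distr hf) => // s; first exact: qB_ge0.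
exact: qB_le1.
Qed.
End Pimix.
Section SerHelp.
Local Open Scope ereal_scope.
Variable R : realType.

Lemma ser_fin (u : nat -> R) n : (forall i, (n <= i)%N -> u i = 0%R) -> (forall i, (0 <= u i)%R) ->
  \sum_(i <oo) (u i)%:E = (\sum_(i < n) u i)%:E.
Proof.
move=> u0 ug0; rewrite (nneseries_split _ n); last by move=> k _; rewrite lee_fin.
rewrite eseries0; last by move=> i ni _; rewrite u0.
by rewrite adde0 add0n sumEFin big_mkord.
Qed.

Lemma ser_tail (qv : nat -> R) : (forall i, (0 <= qv i)%R) -> \sum_(i <oo) (qv i)%:E = 1 ->
  forall eps, (0 < eps)%R -> exists m, \sum_(m <= i <oo) (qv i)%:E <= eps%:E.
Proof.
move=> q0 q1 eps e0.
have : (1 - eps)%:E < \sum_(i <oo) (qv i)%:E by rewrite q1 lte_fin; lra.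
rewrite nnser_sup; last by move=> i; rewrite lee_fin.
case/ereal_sup_gt => _ [m _ <-] hm; exists m.
have := q1; rewrite (nneseries_split _ m); last by move=> k _; rewrite lee_fin.
rewrite add0n sumEFin => h.
have fP : (\sum_(0 <= i < m) qv i)%:E \is a fin_num by [].
rewrite -(leeD2lE _ _ fP) h -EFinD lee_fin.
move: hm; rewrite sumEFin lte_fin; lra.
Qed.
End SerHelp.

Section Best.
Local Open Scope ereal_scope.
Variables (R : realType) (S T : Type) (pi : S -> T -> bool) (e : nat -> T) (f : nat -> S).
Hypothesis hF : ascending_union_closed (B1down pi).
Variable qv : nat -> R.
Hypotheses (qv0 : forall i, (0 <= qv i)%R) (qv1 : \sum_(i <oo) (qv i)%:E = 1).

Definition QB s := \sum_(i <oo) (qv i * (pi s (e i))%:R)%:E.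

Lemma QB_ge0 s : 0 <= QB s.
Proof. by apply: nneseries_ge0 => i _ _; rewrite lee_fin mulr_ge0 // ler0n. Qed.

Lemma QB_le1 s : QB s <= 1.
Proof.
rewrite -qv1; apply: lee_nneseries => [i _ _|i _]; rewrite lee_fin ?mulr_ge0 ?ler0n //.
by rewrite ler_piMr //; case: (pi s (e i)).
Qed.

Lemma best (s1 : S) : exists s0, forall s, QB s <= QB s0.
Proof.
pose sig := ereal_sup (range QB).
have sig0 : 0 <= sig by apply: le_trans (QB_ge0 s1) _; apply: ereal_sup_ubound; exists s1.
have sig1 : sig <= 1 by apply: ge_ereal_sup => _ [s _ <-]; exact: QB_le1.
have sigf : sig \is a fin_num by rewrite ge0_fin_numE // (le_lt_trans sig1) // ltey.
have /choice[sn hsn] : forall n : nat, exists s, sig - (n.+1%:R^-1)%:E < QB s.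
  move=> n; have : sig - (n.+1%:R^-1)%:E < sig.
    by rewrite lteBlDr // lteDl // lte_fin invr_gt0.
  by case/ereal_sup_gt => _ [s _ <-] h; exists s.
have [b Hb] := konig (fun n i => pi (sn n) (e i)).
pose A m := [set t | exists i, [/\ (i < m)%N, e i = t & b i]].
have hA : B1down pi (\bigcup_m A m).
  apply: hF.
    move=> m; have [n [_ Hn]] := Hb m 0%N; exists (sn n) => t [i [im <- bi]].
    by rewrite /Bset /= -Hn.
  by move=> m t [i [im et bi]]; exists i; split => //; exact: ltnW.
case: hA => s0 Hs0; exists s0.
have bs0 i : b i -> pi s0 (e i).
  by move=> bi; apply: Hs0; exists i.+1 => //; exists i; split.
suff H : sig <= QB s0 by move=> s; apply: le_trans H; apply: ereal_sup_ubound; exists s.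
apply/lee_addgt0Pr => eps e0.
have e2 : (0 < eps / 2)%R by rewrite divr_gt0.
have [m Hm] := ser_tail qv0 qv1 e2.
pose N0 := Num.truncn ((eps / 2)^-1).
have [n [nN Hn]] := Hb m N0.
have h1 : sig <= QB (sn n) + (eps / 2)%:E.
  have := hsn n; rewrite lteBlDr // => /ltW h; apply: le_trans h _.
  rewrite leeD2lE // ?fin_numE; last first.
    by apply/andP; split; apply/eqP => h0; have := QB_ge0 (sn n); have := QB_le1 (sn n); rewrite h0.
  rewrite lee_fin -[leRHS]invrK lef_pV2 ?posrE ?invr_gt0 ?ltr0n //.
  apply: ltW; apply: lt_le_trans (truncnS_gt _) _; rewrite ler_nat; exact: nN.
have h2 : QB (sn n) <= QB s0 + (eps / 2)%:E.
  rewrite /QB (nneseries_split _ m); last by move=> k _; rewrite lee_fin mulr_ge0 // ler0n.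
  rewrite add0n; apply: leeD.
    apply: le_trans (_ : _ <= \sum_(0 <= i < m) (qv i * (pi s0 (e i))%:R)%:E) _.
      rewrite !sumEFin lee_fin; apply: ler_sum_nat => i /= im.
      rewrite -Hn //; case bi : (b i); rewrite ?mulr0 ?mulr1 ?(bs0 i bi) ?mulr1 ?mulr_ge0 //.
    by apply: nneseries_lim_ge => k _ _; rewrite lee_fin mulr_ge0 // ler0n.
  apply: le_trans Hm; apply: lee_nneseries => [i _ _|i _]; rewrite lee_fin ?mulr_ge0 ?ler0n //.
  by rewrite ler_piMr //; case: (pi _ _).
apply: le_trans h1 _; apply: le_trans (leeD h2 (lexx _)) _.
by rewrite -addeA -EFinD -splitr.
Qed.
End Best.
Section Main.
Local Open Scope ereal_scope.

Lemma pstar_exists (R : realType) (S T : choiceType) (pi : S -> T -> bool)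
  (f : nat -> S) (e : nat -> T) (hf : bijective f) (he : bijective e)
  (hF : ascending_union_closed (B1down pi)) (v : R) (v0 : (0 <= v)%R)
  (BRq : forall q, distr R T q -> forall d, (0 < d)%R -> exists s, (v - d)%:E <= qB pi q s) :
  exists2 p, distr R S p & forall t, v%:E <= pB pi p t.
Proof.
have [finv ff1 ff2] := hf; have [einv ee1 ee2] := he.
have fsurj s : exists k, f k = s by exists (finv s).
have esurj t : exists i, e i = t by exists (einv t).
have BR N : forall w : nat -> R, (forall j, 0 <= w j)%R -> (0 < \sum_(j < N.+1) w j)%R ->
    forall d, (0 < d)%R -> exists s,
    ((v - d) * \sum_(j < N.+1) w j <= \sum_(j < N.+1) w j * (pi s (e j))%:R)%R.
  move=> w w0 W0 d d0.
  pose W := (\sum_(j < N.+1) w j)%R.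
  pose q t := ((if (einv t < N.+1)%N then w (einv t) else 0) / W)%R.
  have qe i : q (e i) = ((if (i < N.+1)%N then w i else 0) / W)%R by rewrite /q ee1.
  have q0 t : (0 <= q t)%R.
    by rewrite /q; apply: divr_ge0; [case: ifP => _ //; exact: w0 | exact: ltW].
  have hq : distr R T q.
    split => //; rewrite (esum_enum he); last by move=> t; rewrite lee_fin.
    rewrite (@ser_fin _ (fun i => q (e i)) N.+1) //; last first.
      by move=> i iN; rewrite qe ifF ?mul0r //; apply/negbTE; rewrite -leqNgt.
    rewrite (eq_bigr (fun j : 'I_N.+1 => w j / W)%R); last by move=> j _; rewrite qe ltn_ord.
    by rewrite -mulr_suml divff // gt_eqF.
  have [s hs] := BRq q hq d d0.
  exists s; move: hs; rewrite /qB (esum_enum he); last by move=> t; rewrite lee_fin mulr_ge0 // ler0n.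
  rewrite (@ser_fin _ (fun i => q (e i) * (pi s (e i))%:R)%R N.+1); last 2 first.
      by move=> i iN; rewrite qe ifF ?mul0r //; apply/negbTE; rewrite -leqNgt.
    by move=> i; rewrite mulr_ge0 // ler0n.
  rewrite (eq_bigr (fun j : 'I_N.+1 => (w j * (pi s (e j))%:R) / W)%R); last first.
    by move=> j _; rewrite qe ltn_ord mulrAC.
  by rewrite -mulr_suml lee_fin ler_pdivlMr.
have /choice[Ls hLs] : forall N : nat, exists l : seq S, (0 < size l)%N /\
    forall j, (j < N.+1)%N -> ((v - N.+1%:R^-1) * (size l)%:R <= (count (fun s => pi s (e j)) l)%:R)%R.
  move=> N; apply: (@hedge _ _ N.+1 (fun s j => pi s (e j))) => //; first exact: BR.
have [U [UU sU]] := ultraFilterLemma (eventually_filter).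
pose xr (X : set S) (N : nat) : R := ((count (fun s => `[< X s >]) (Ls N))%:R / (size (Ls N))%:R)%R.
have sz0 N : (0 < (size (Ls N))%:R :> R)%R by rewrite ltr0n; case: (hLs N).
have xr01 X N : (0 <= xr X N <= 1)%R.
  rewrite /xr; apply/andP; split; first by apply: divr_ge0; [exact: ler0n | exact: ltW].
  by rewrite ler_pdivrMr // mul1r ler_nat count_size.
have /choice[lam hlam] : forall X : set S, exists L, islim U L (xr X).
  by move=> X; apply: islim_ex.
have lam0 X : (0 <= lam X)%R.
  by apply: (islim_le UU (islim_cst UU 0%R) (hlam X)) => N; case/andP: (xr01 X N).
have lamT : lam setT = 1%R.
  have xT : xr setT = fun=> 1%R.
    apply: funext => N; rewrite /xr (eq_count (a2 := predT)); last by move=> s; rewrite asboolT.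
    by rewrite count_predT divff // gt_eqF.
  by have := hlam setT; rewrite xT => h; exact: (islim_uniq UU h (islim_cst UU 1%R)).
have lamD X Y : X `&` Y = set0 -> lam (X `|` Y) = (lam X + lam Y)%R.
  move=> XY; have xD : xr (X `|` Y) = fun N => (xr X N + xr Y N)%R.
    apply: funext => N; rewrite /xr -mulrDl -natrD; congr (_%:R / _)%R.
    rewrite -count_predUI (eq_count (a1 := predI _ _) (a2 := pred0)) ?count_pred0 ?addn0.
      by apply: eq_count => s /=; rewrite asbool_or.
    move=> s /=; apply/negbTE/negP => /andP[/asboolP Xs /asboolP Ys].
    by have : (X `&` Y) s by []; rewrite XY.
  by have := hlam (X `|` Y); rewrite xD => h; exact: (islim_uniq UU h (islimD UU (hlam X) (hlam Y))).
have lampos X : (0 < lam X)%R -> X !=set0.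
  move=> h; have [N hN] := islim_pos UU (hlam X) h.
  have : (0 < count (fun s => `[< X s >]) (Ls N))%N.
    rewrite lt0n; apply/negP => /eqP c0; move: hN; rewrite /xr c0 mul0r ltxx //.
  by rewrite -has_count => /hasP[s _ /asboolP Xs]; exists s.
have cov t : (v <= lam [set s | pi s t])%R.
  have [j ejt] := esurj t.
  apply: (islim_ge UU (hlam _)) => eps e0.
  apply: sU; exists (maxn j (Num.truncn eps^-1)) => // N /= NN0.
  have [_ hN] := hLs N.
  have jN : (j < N.+1)%N by rewrite ltnS; apply: leq_trans NN0; exact: leq_maxl.
  have := hN j jN; rewrite /xr (eq_count (a1 := fun s => `[< pi s t >]) (a2 := fun s => pi s (e j))); last first.
    by move=> s; rewrite asboolb ejt.
  rewrite -ler_pdivlMr // => h; apply: le_trans h.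
  rewrite lerB // ltW // -[eps]invrK ltf_pV2 ?posrE ?invr_gt0 ?ltr0n //.
  apply: lt_le_trans (truncnS_gt _) _; rewrite ler_nat ltnS; apply: leq_trans NN0; exact: leq_maxr.
have [a [a0 a1 a2 a3]] := construct esurj fsurj hF lam0 lamT lamD lampos cov.
pose p s := a (finv s).
have p0 s : (0 <= p s)%R by apply: a0.
exists p.
  split => //; rewrite (esum_enum hf); last by move=> s; rewrite lee_fin.
  rewrite (eq_eseriesr (g := fun k => (a k)%:E)); last by move=> k _; rewrite /p ff1.
  rewrite nnser_sup; last by move=> k; rewrite lee_fin.
  apply/eqP; rewrite eq_le; apply/andP; split.
    by apply: ge_ereal_sup => _ [K _ <-]; rewrite sumEFin big_mkord lee_fin; exact: a1.
  apply/lee_addgt0Pr => eps e0; have [K hK] := a2 _ e0.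
  apply: le_trans (_ : _ <= (\sum_(0 <= k < K) (a k)%:E) + eps%:E) _.
    by rewrite sumEFin big_mkord -EFinD lee_fin; lra.
  by apply: leeD => //; apply: ereal_sup_ubound; exists K.
move=> t; rewrite /pB (esum_enum hf); last by move=> s; rewrite lee_fin mulr_ge0 // ler0n.
rewrite (eq_eseriesr (g := fun k => (a k * (pi (f k) t)%:R)%:E)); last by move=> k _; rewrite /p ff1.
apply/lee_addgt0Pr => eps e0; have [K hK] := a3 t _ e0.
apply: le_trans (_ : _ <= (\sum_(0 <= k < K) (a k * (pi (f k) t)%:R)%:E) + eps%:E) _.
  by rewrite sumEFin big_mkord -EFinD lee_fin; lra.
apply: leeD => //; apply: nneseries_lim_ge => k _ _; rewrite lee_fin mulr_ge0 // ler0n.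
Qed.

End Main.

Unset Implicit Arguments.
Local Open Scope ereal_scope.

Theorem theorem2p2 (R : realType) (S T : choiceType) (pi : S -> T -> bool)
  (hS : countably_infinite S) (hT : countably_infinite T)
  (hF : ascending_union_closed (B1down pi)) :
  (forall q, distr R T q ->
     exists2 p0, distr R S p0 &
       pimix pi p0 q = ereal_sup [set pimix pi p q | p in distr R S]) /\
  (exists2 p0, distr R S p0 &
     ereal_inf [set pimix pi p0 q | q in distr R T] =
     ereal_sup [set ereal_inf [set pimix pi p q | q in distr R T] | p in distr R S]) /\
  ereal_sup [set ereal_inf [set pimix pi p q | q in distr R T] | p in distr R S] =
  ereal_inf [set ereal_sup [set pimix pi p q | p in distr R S] | q in distr R T].
Proof.
case: hS => f hf; case: hT => e he.
have dS s0 : distr R S (dirac R s0) by exact: dirac_distr.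
have dT t0 : distr R T (dirac R t0) by exact: dirac_distr.
set V := ereal_inf [set ereal_sup [set pimix pi p q | p in distr R S] | q in distr R T].
set LHS := ereal_sup [set ereal_inf [set pimix pi p q | q in distr R T] | p in distr R S].
have weak : LHS <= V.
  apply: ge_ereal_sup => _ [p hp <-]; apply: le_ereal_inf_tmp => _ [q hq <-].
  apply: le_trans (_ : _ <= pimix pi p q) _.
    by apply: ereal_inf_lbound; exists q.
  by apply: ereal_sup_ubound; exists p.
have V0 : 0 <= V.
  apply: le_ereal_inf_tmp => _ [q hq <-]; apply: le_trans (pimix_ge0 pi (dS (f 0%N)) hq) _.
  by apply: ereal_sup_ubound; exists (dirac R (f 0%N)).
have V1 : V <= 1.
  apply: le_trans (_ : _ <= ereal_sup [set pimix pi p (dirac R (e 0%N)) | p in distr R S]) _.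
    by apply: ereal_inf_lbound; exists (dirac R (e 0%N)).
  by apply: ge_ereal_sup => _ [p hp <-]; exact: (pimix_le1 pi hf he hp (dT _)).
have Vf : V \is a fin_num by rewrite ge0_fin_numE // (le_lt_trans V1) // ltey.
pose v := fine V.
have Vv : V = v%:E by rewrite fineK.
have v0 : (0 <= v)%R by rewrite -lee_fin -Vv.
have BRq : forall q, distr R T q -> forall d, (0 < d)%R -> exists s, (v - d)%:E <= qB pi q s.
  move=> q hq d d0; have [q0 q1] := hq.
  case: (lerP (v - d) 0%R) => hvd.
    by exists (f 0%N); apply: le_trans (qB_ge0 pi _ q0); rewrite lee_fin.
  have hle : V <= ereal_sup [set pimix pi p q | p in distr R S].
    by apply: ereal_inf_lbound; exists q.
  have : (v - d)%:E < V by rewrite Vv lte_fin; lra.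
  move/lt_le_trans/(_ hle); case/ereal_sup_gt => _ [p hp <-] hpq.
  apply: contrapT => /forallNP H; have [p0 p1] := hp.
  have : pimix pi p q <= (v - d)%:E.
    rewrite (pimix_S pi he) //; apply: (esum_le_distr hf) => //.
    - by move=> s; exact: qB_ge0.
    - exact: ltW.
    by move=> s; apply: ltW; rewrite ltNge; apply/negP; exact: H s.
  by rewrite leNgt hpq.
have [pst hpst covst] := pstar_exists hf he hF v0 BRq.
have Ist : V <= ereal_inf [set pimix pi pst q | q in distr R T].
  apply: le_ereal_inf_tmp => _ [q hq <-].
  have [q0 q1] := hq; have [p0 p1] := hpst.
  rewrite (pimix_T pi hf) // Vv; apply: (esum_ge_distr he) => //.
have eq1 : LHS = V.
  apply/eqP; rewrite eq_le weak /=; apply: le_trans Ist _.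
  by apply: ereal_sup_ubound; exists pst.
split.
  move=> q hq; have [q0 q1] := hq.
  pose qv i := q (e i).
  have qv1 : \sum_(i <oo) (qv i)%:E = 1.
    by rewrite -q1 (esum_enum he) // => t; rewrite lee_fin.
  have QBq s : QB pi e qv s = qB pi q s.
    by rewrite /QB /qB (esum_enum he) // => t; rewrite lee_fin mulr_ge0 // ler0n.
  have [s0 Hs0] := best e hF (fun i => q0 (e i)) qv1 (f 0%N).
  exists (dirac R s0) => //.
  have hpm : pimix pi (dirac R s0) q = qB pi q s0.
    rewrite (pimix_S pi he) //; last by case: (dS s0).
    by apply: esum_dirac => s; exact: qB_ge0.
  rewrite hpm; apply/eqP; rewrite eq_le; apply/andP; split.
    by rewrite -hpm; apply: ereal_sup_ubound; exists (dirac R s0).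
  apply: ge_ereal_sup => _ [p hp <-]; have [p0 p1] := hp.
  have qf : qB pi q s0 \is a fin_num.
    by rewrite ge0_fin_numE ?qB_ge0 // (le_lt_trans (qB_le1 pi s0 hq)) // ltey.
  rewrite (pimix_S pi he) // -(fineK qf); apply: (esum_le_distr hf) => //.
  - by move=> s; exact: qB_ge0.
  - by rewrite fine_ge0 // qB_ge0.
  by move=> s; rewrite fineK // -!QBq; exact: Hs0.
split; last by rewrite -/LHS -/V eq1.
exists pst => //; rewrite -/LHS; apply/eqP; rewrite eq_le; apply/andP; split.
  by apply: ereal_sup_ubound; exists pst.
by rewrite eq1.
Qed.
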